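(* Let $\Delta$ be a finite set of defaults such that $\Delta^\rightarrow$ is consistent, and suppose $\Delta$ has Z-partition $(\Delta_0,\ldots,\Delta_n)$. Then for all $\theta,\phi\in L$: $\theta\mid\!\sim^\Delta_{lex}\phi$ if and only if $\theta\mid\!\sim_{\vec{\mathcal R}}\phi$, where $\vec{\mathcal R}=(\cdots((\vec{\mathcal U}^\emptyset*\vec{\mathcal U}^{\Delta^\rightarrow_0})*\vec{\mathcal U}^{\Delta^\rightarrow_1})*\cdots)*\vec{\mathcal U}^{\Delta^\rightarrow_n}$.
   Context: $L$ is a propositional language built from a finite set of propositional variables with the connectives $\neg,\wedge,\vee,\rightarrow,\top,\bot$; $W$ is the finite set of propositional worlds. For $\theta\in L$, $S_\theta=\{w\in W\mid w\models\theta\}$; $E\models\phi$ means $\bigcap_{\theta\in E}S_\theta\subseteq S_\phi$; $E$ is consistent iff $E\not\models\bot$. For $w\in W$ and $E\subseteq L$, $\mathrm{sent}_E(w)=\{\theta\in E\mid w\models\theta\}$. Defaults: a default is an expression $\lambda\Rightarrow\chi$ with $\lambda,\chi\in L$. For a set $\Gamma$ of defaults, $\Gamma^\rightarrow=\{\lambda\rightarrow\chi\mid\lambda\Rightarrow\chi\in\Gamma\}$. A default $\lambda\Rightarrow\chi$ is tolerated by $\Gamma$ iff $\{\lambda\wedge\chi\}\cup\Gamma^\rightarrow$ is consistent. The Z-partition of $\Delta$ is obtained by letting $\Delta_0$ be the set of defaults in $\Delta$ tolerated by $\Delta$, and, for $i\ge1$, $\Delta_i$ the set of defaults in $\Delta\setminus(\Delta_0\cup\cdots\cup\Delta_{i-1})$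 tolerated by $\Delta\setminus(\Delta_0\cup\cdots\cup\Delta_{i-1})$, stopping at the first $n$ with $\Delta_0\cup\cdots\cup\Delta_n=\Delta$ (the Z-partition exists when each step yields a nonempty set until $\Delta$ is exhausted). Lexicographic closure: for $A,B\subseteq\Delta$ let $A_i=A\cap\Delta_i$, $B_i=B\cap\Delta_i$; $A\ll_{lex}B$ iff there is $i$ with $|A_i|<|B_i|$ and $|A_j|=|B_j|$ for all $j>i$. Then $\theta\mid\!\sim^\Delta_{lex}\phi$ iff for every $\Gamma\subseteq\Delta$ such that $\Gamma^\rightarrow\cup\{\theta\}$ is consistent and $\Gamma$ is $\ll_{lex}$-maximal among such subsets (no such $\Gamma'$ with $\Gamma\ll_{lex}\Gamma'$), we have $\Gamma^\rightarrow\cup\{\theta\}\models\phi$. Sequences: finite sequences $\vec{\mathcal U}=(\mathcal U_0,\ldots,\mathcal U_k)$ of mutually disjoint subsets of $W$ (components may be empty, possibly repeatedly). $\mathrm{rank}^{\vec{\mathcal U}}(\theta)$ is the least $i$ with $\mathcal U_i\cap S_\theta\neq\emptyset$, $\infty$ if none ($i<\infty$ for all integers $i$). $\theta\mid\!\sim_{\vec{\mathcal U}}\phi$ iff $\mathrm{rank}^{\vec{\mathcal U}}(\theta)<\mathrm{rank}^{\vec{\mathcal U}}(\theta\wedge\neg\phi)$ or $\mathrm{rank}^{\vec{\mathcal U}}(\theta)=\infty$. $\vec{\mathcal U}$ is full iff $\bigcup_i\mathcal U_i=W$, empty iff $\bigcup_i\mathcal U_i=\emptyset$; $\Upsilon$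 is the set of sequences which are full or empty. Sequence revision: for $\vec{\mathcal U}=(\mathcal U_0,\ldots,\mathcal U_k)$, $\vec{\mathcal V}=(\mathcal V_0,\ldots,\mathcal V_m)$ in $\Upsilon$, if $\vec{\mathcal U}$ is full then $\vec{\mathcal U}*\vec{\mathcal V}=(\mathcal U_0\cap\mathcal V_0,\ldots,\mathcal U_k\cap\mathcal V_0,\ \mathcal U_0\cap\mathcal V_1,\ldots,\mathcal U_k\cap\mathcal V_1,\ \ldots,\ \mathcal U_0\cap\mathcal V_m,\ldots,\mathcal U_k\cap\mathcal V_m)$; otherwise $\vec{\mathcal U}*\vec{\mathcal V}=\vec{\mathcal V}$. For finite $E\subseteq L$ with $|E|=k$: $\mathcal U^E_i=\{w\in W\mid|\mathrm{sent}_E(w)|=k-i\}$ ($i=0,\ldots,k$) if $E\not\models\bot$, and $\mathcal U^E_i=\emptyset$ otherwise; $\vec{\mathcal U}^E=(\mathcal U^E_0,\ldots,\mathcal U^E_k)$. In particular $\vec{\mathcal U}^\emptyset=(W)$. *)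

(* Defs.v *)
From mathcomp Require Import all_boot.
Set Implicit Arguments.
Unset Strict Implicit.
Unset Printing Implicit Defensive.

Inductive form (V : Type) : Type :=
  | FVar of V
  | FNeg of form V
  | FAnd of form V & form V
  | FOr of form V & form V
  | FImp of form V & form V
  | FTop
  | FBot.
Arguments FTop {V}.
Arguments FBot {V}.

Definition world (V : finType) := {ffun V -> bool}.

Fixpoint sat (V : finType) (w : world V) (f : form V) : bool :=
  match f with
  | FVar v => w v
  | FNeg g => ~~ sat w g
  | FAnd g h => sat w g && sat w h
  | FOr g h => sat w g || sat w h
  | FImp g h => sat w g ==> sat w h
  | FTop => true
  | FBot => false
  end.

Definition entails (V : finType) (E : seq (form V)) (phi : form V) : bool :=
  [forall w : world V, all (sat w) E ==> sat w phi].

Definition consistent (V : finType) (E : seq (form V)) : bool :=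
  ~~ entails E FBot.

Section Defaults.
Variables (V I : finType).
(* A finite set of defaults Delta is given as an injective family
   D : I -> form V * form V, (lambda, chi) standing for lambda => chi.
   Subsets of Delta are subsets of the index type I. *)
Variable D : I -> form V * form V.

Definition dimp (d : form V * form V) : form V := FImp d.1 d.2.

Definition arrows (G : {set I}) : seq (form V) := [seq dimp (D j) | j <- enum G].

Definition tolerated (d : form V * form V) (G : {set I}) : bool :=
  consistent (FAnd d.1 d.2 :: arrows G).

Definition Zpartition (P : nat -> {set I}) (n : nat) : Prop :=
  (forall i, i <= n ->
     P i = [set j in setT :\: \bigcup_(k < i) P k
              | tolerated (D j) (setT :\: \bigcup_(k < i) P k)])
  /\ (forall i, i < n -> \bigcup_(k < i.+1) P k != setT)
  /\ \bigcup_(k < n.+1) P k = setT.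

Definition lexlt (P : nat -> {set I}) (n : nat) (A B : {set I}) : Prop :=
  exists i, i <= n /\ #|A :&: P i| < #|B :&: P i| /\
    (forall j, i < j <= n -> #|A :&: P j| = #|B :&: P j|).

Definition lex_cons (P : nat -> {set I}) (n : nat) (theta phi : form V) : Prop :=
  forall G : {set I},
    consistent (theta :: arrows G) ->
    ~ (exists G' : {set I}, consistent (theta :: arrows G') /\ lexlt P n G G') ->
    entails (theta :: arrows G) phi.

End Defaults.

Section Sequences.
Variable V : finType.
Notation wseq := (seq {set world V}).

Definition hits (theta : form V) (U : {set world V}) : bool :=
  [exists w in U, sat w theta].

(* rank: None stands for infinity *)
Definition rank (s : wseq) (theta : form V) : option nat :=
  if has (hits theta) s then Some (find (hits theta) s) else None.

Definition lt_rank (a b : option nat) : bool :=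
  match a, b with
  | Some i, Some j => i < j
  | Some _, None => true
  | None, _ => false
  end.

Definition seq_cons (s : wseq) (theta phi : form V) : bool :=
  lt_rank (rank s theta) (rank s (FAnd theta (FNeg phi))) || (rank s theta == None).

Definition full (s : wseq) : bool := \bigcup_(U <- s) U == setT.

Definition revise (s t : wseq) : wseq :=
  if full s then flatten [seq [seq Ui :&: Vj | Ui <- s] | Vj <- t] else t.

(* U^E for a finite set E, given as a duplicate-free list *)
Definition Uvec (E : seq (form V)) : wseq :=
  if consistent E then
    mkseq (fun i => [set w | count (sat w) E == size E - i]) (size E).+1
  else nseq (size E).+1 set0.

End Sequences.

Definition Rseq (V I : finType) (D : I -> form V * form V)
  (P : nat -> {set I}) (n : nat) : seq {set world V} :=
  foldl (@revise V) (Uvec [::]) [seq Uvec (arrows D (P i)) | i <- iota 0 n.+1].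

(* Main.v *)
Require Import Defs.
From mathcomp Require Import all_boot.
Set Implicit Arguments.
Unset Strict Implicit.
Unset Printing Implicit Defensive.

Section Seqs.
Variable V : finType.
Notation W := (world V).

Definition lvsets (f : W -> nat) (a : nat) : seq {set W} :=
  mkseq (fun k => [set w | f w == k]) a.

Lemma in_bigcup_seq (s : seq {set W}) (U : {set W}) x :
  U \in s -> x \in U -> x \in \bigcup_(U' <- s) U'.
Proof.
elim: s => // U0 s IH; rewrite inE big_cons in_setU => /orP [/eqP <- -> //|].
by move=> Us xU; rewrite IH ?orbT.
Qed.

Lemma lv_nth f a k : k < a -> nth set0 (lvsets f a) k = [set w | f w == k].
Proof. by move=> ka; rewrite /lvsets nth_mkseq. Qed.

Lemma lv_full f a : (forall w, f w < a) -> full (lvsets f a).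
Proof.
move=> fa; apply/eqP/setP => x; rewrite inE.
apply: (@in_bigcup_seq _ (nth set0 (lvsets f a) (f x))).
  by apply: mem_nth; rewrite size_mkseq.
by rewrite lv_nth // inE.
Qed.

Lemma flatten_lv f a g b : (forall w, f w < a) ->
  flatten [seq [seq Ui :&: Vj | Ui <- lvsets f a] | Vj <- lvsets g b]
  = lvsets (fun w => g w * a + f w) (b * a).
Proof.
move=> fa; elim: b => [|b IH]; first by [].
rewrite [lvsets g _]/lvsets mkseqS -cats1 map_cat flatten_cat -/(lvsets g b) IH /=.
rewrite cats0 /lvsets mulSn addnC /mkseq iotaD map_cat add0n; congr cat.
rewrite -[b * a]addn0 iotaDl -!map_comp; apply/eq_in_map => i.
rewrite mem_iota add0n => /= ia.
apply/setP => w; rewrite !inE /=.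

apply/idP/idP => [/andP [/eqP -> /eqP ->] //|/eqP E].
have Ef : f w = i.
  have := congr1 (modn^~ a) E.
  by rewrite /= !modnMDl !modn_small.
rewrite Ef eqxx /=; move: E; rewrite Ef => /addIn/eqP.
by rewrite eqn_pmul2r // (leq_ltn_trans _ ia).
Qed.

Lemma revise_lv f a g b : (forall w, f w < a) ->
  revise (lvsets f a) (lvsets g b) = lvsets (fun w => g w * a + f w) (b * a).
Proof. by move=> fa; rewrite /revise lv_full // flatten_lv. Qed.

Lemma rank_lv (pos : W -> nat) N (hN : forall w, pos w < N) (th : form V) :
  (rank (lvsets pos N) th = None /\ forall w, ~~ sat w th) \/
  (exists k, rank (lvsets pos N) th = Some k /\ (exists w, sat w th /\ pos w = k)
     /\ forall u, sat u th -> k <= pos u).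
Proof.
rewrite /rank; case: ifP => h.
  right; exists (find (hits th) (lvsets pos N)); split=> //.
  have hk := h; rewrite has_find size_mkseq in hk.
  split.
    have := nth_find set0 h; rewrite lv_nth // /hits => /existsP [w /andP [wi ws]].
    by exists w; split=> //; move: wi; rewrite inE => /eqP.
  move=> u su; rewrite leqNgt; apply/negP => lt.
  have := before_find set0 lt; rewrite lv_nth // /hits.
  by move/negbT/existsPn/(_ u); rewrite inE eqxx su.
left; split=> // w; apply/negP => sw; move/negbT: h => /hasPn h.
have := h (nth set0 (lvsets pos N) (pos w)).
rewrite mem_nth ?size_mkseq // => /(_ isT); rewrite lv_nth // /hits.
by move/existsPn/(_ w); rewrite inE eqxx sw.
Qed.

Lemma seq_cons_lv (pos : W -> nat) N (hN : forall w, pos w < N) (th ph : form V) :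
  seq_cons (lvsets pos N) th ph <->
  (forall w, sat w th -> (forall u, sat u th -> pos w <= pos u) -> sat w ph).
Proof.
rewrite /seq_cons.
case: (rank_lv hN th) => [[-> nth]|[k [-> [[w0 [s0 e0]] mk]]]].
  by rewrite orbT; split=> // _ w sw; rewrite (negbTE (nth w)) in sw.
rewrite orbF.
case: (rank_lv hN (FAnd th (FNeg ph))) => [[-> n2]|[k' [-> [[w1 [s1 e1]] mk']]]].
  split=> // _ w sw _; have := n2 w; rewrite /= sw /=; exact: negbNE.
rewrite /=; move: s1; rewrite /= => /andP [s1 n1].
split.
  move=> kk w sw mw; apply/negPn/negP => nw.
  have := mk' w; rewrite /= sw nw => /(_ isT) h.
  have := mw w0 s0; rewrite e0 => h2.
  by have := leq_trans h h2; rewrite leqNgt kk.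
move=> H; rewrite ltn_neqAle -e1 mk // andbT; apply/negP => /eqP ek.
suff: sat w1 ph by rewrite (negbTE n1).
by apply: H => // u su; rewrite -ek mk.
Qed.

End Seqs.
From mathcomp Require Import zify.

Lemma count_enumG (T : finType) (p : pred T) (G : {set T}) :
  count p (enum G) = #|[set j in G | p j]|.
Proof.
rewrite -size_filter cardE /enum_mem -filter_predI; congr size; apply: eq_filter => x.
by rewrite !inE andbC.
Qed.

Lemma consP (V : finType) (E : seq (form V)) :
  consistent E <-> exists w, all (sat w) E.
Proof.
rewrite /consistent /entails negb_forall; split.
  by move/existsP=> [w]; rewrite implybF negbK; exists w.
by move=> [w h]; apply/existsP; exists w; rewrite implybF negbK.
Qed.

Lemma entP (V : finType) (E : seq (form V)) ph :
  entails E ph <-> forall w, all (sat w) E -> sat w ph.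
Proof.
split; first by move/forallP => h w; apply/implyP/h.
by move=> h; apply/forallP=> w; apply/implyP/h.
Qed.

Lemma cons_nil (V : finType) : consistent (@nil (form V)).
Proof. by apply/consP; exists [ffun=> true]. Qed.

Lemma Uvec_lv (V : finType) (E : seq (form V)) : consistent E ->
  Uvec E = lvsets (fun w => size E - count (sat w) E) (size E).+1.
Proof.
move=> h; rewrite /Uvec h /lvsets; apply/eq_in_map => k; rewrite mem_iota => /andP [_ k1].
apply/setP=> w; rewrite !inE; have := count_size (sat w) E => cs.
by apply/eqP/eqP; lia.
Qed.

Lemma arith_lt a b x y A : a < b -> x < A -> a * A + x < b * A + y.
Proof.
move=> ab xA; apply: (@leq_trans (a.+1 * A)).
  by rewrite mulSn addnC ltn_add2r.
exact: leq_trans (leq_mul ab (leqnn A)) (leq_addr _ _).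
Qed.

Lemma arith a b x y A : x < A -> y < A ->
  (a * A + x < b * A + y) = (a < b) || ((a == b) && (x < y)).
Proof.
move=> xA yA; case: (ltngtP a b) => h /=.
- exact: arith_lt.
- by apply/negbTE; rewrite -leqNgt ltnW // arith_lt.
- by rewrite h ltn_add2l.
Qed.

Section Dft.
Variables (V I : finType) (D : I -> form V * form V) (P : nat -> {set I}).
Notation W := (world V).

Definition Gw (w : W) : {set I} := [set j | sat w (dimp (D j))].

Lemma all_arrows w G : all (sat w) (arrows D G) = (G \subset Gw w).
Proof.
rewrite all_map; apply/allP/subsetP => h j.
  by move=> jG; rewrite inE; apply: (h j); rewrite mem_enum.
by rewrite mem_enum => jG; have := h j jG; rewrite inE.
Qed.

Lemma count_arrows w G : count (sat w) (arrows D G) = #|Gw w :&: G|.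
Proof.
rewrite count_map count_enumG; apply: eq_card => j; rewrite !inE andbC.
by [].
Qed.

Lemma size_arrows G : size (arrows D G) = #|G|.
Proof. by rewrite size_map cardE. Qed.

Definition E i := arrows D (P i).
Definition vv i (w : W) := size (E i) - count (sat w) (E i).
Fixpoint Am m := if m is m'.+1 then (size (E m')).+1 * Am m' else 1.
Fixpoint posm m (w : W) := if m is m'.+1 then vv m' w * Am m' + posm m' w else 0.

Lemma posm_lt m w : posm m w < Am m.
Proof.
elim: m => [//|m IH] /=.
apply: (@leq_trans (vv m w * Am m + Am m)); first by rewrite ltn_add2l.
by rewrite -mulSnr leq_mul2r ltnS leq_subr orbT.
Qed.

Definition lexm m (A B : {set I}) : Prop :=
  exists i, i < m /\ #|A :&: P i| < #|B :&: P i| /\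
    (forall j, i < j < m -> #|A :&: P j| = #|B :&: P j|).

Lemma lexmS m (A B : {set I}) : lexm m.+1 A B <->
  #|A :&: P m| < #|B :&: P m| \/ (#|A :&: P m| = #|B :&: P m| /\ lexm m A B).
Proof.
split.
  move=> [i [im [lt eq]]]; rewrite ltnS leq_eqVlt in im.
  case/orP: im => [/eqP ei|im]; first by left; rewrite -ei.
  right; split; first by apply: eq; rewrite im ltnSn.
  exists i; split=> //; split=> // j /andP [ij jm]; apply: eq.
  by rewrite ij /= ltnS ltnW.
case=> [lt|[eqm [i [im [lt eq]]]]].
  exists m; split=> //; split=> // j /andP [mj jm]; by rewrite ltnS leqNgt mj in jm.
exists i; split; first by rewrite ltnS ltnW.
split=> // j /andP [ij]; rewrite ltnS leq_eqVlt => /orP [/eqP -> //|jm].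
by apply: eq; rewrite ij jm.
Qed.

Lemma posm_ltE m w u : posm m w < posm m u <-> lexm m (Gw u) (Gw w).
Proof.
elim: m => [|m IH]; first by split=> //; case=> i [].
have hw : #|Gw w :&: P m| <= #|P m| by rewrite subset_leq_card // subsetIr.
have hu : #|Gw u :&: P m| <= #|P m| by rewrite subset_leq_card // subsetIr.
rewrite /= arith ?posm_lt // lexmS /vv /E !count_arrows size_arrows -IH.
split => [/orP [h|/andP [/eqP h1 h2]] | [h|[h1 h2]]].
- by left; lia.
- by right; split; [lia|].
- by apply/orP; left; lia.
- by apply/orP; right; rewrite h2 andbT; apply/eqP; lia.
Qed.

Lemma lexm_weak m (A C : {set I}) : (exists i, i < m /\ #|A :&: P i| < #|C :&: P i| /\
    forall j, i < j < m -> #|A :&: P j| <= #|C :&: P j|) -> lexm m A C.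
Proof.
elim: m => [|m IH] [i [im [lt le]]]; first by [].
apply/lexmS; case: (ltnP #|A :&: P m| #|C :&: P m|) => h; [by left|right].
have ilt : i < m.
  rewrite ltnS leq_eqVlt in im; case/orP: im => [/eqP ei|//].
  by move: lt; rewrite ei ltnNge h.
split.
  by apply/eqP; rewrite eqn_leq h le // ilt ltnSn.
apply: IH; exists i; split=> //; split=> // j /andP [ij jm]; apply: le.
by rewrite ij /= ltnS ltnW.
Qed.

Lemma lexltE n (A B : {set I}) : lexlt P n A B <-> lexm n.+1 A B.
Proof.
split; move=> [i [a [b c]]]; exists i; split; rewrite ?ltnS //; split=> // j;
  rewrite ltnS; exact: c.
Qed.

Lemma lexU1 m (A B C : {set I}) : lexm m A B -> B \subset C -> lexm m A C.
Proof.
move=> [i [im [lt eq]]] BC; apply: lexm_weak; exists i; split=> //; split.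
  by apply: (leq_trans lt); apply: subset_leq_card; apply: setSI.
by move=> j hj; rewrite eq //; apply: subset_leq_card; apply: setSI.
Qed.

Lemma lexU2 m (A B C : {set I}) : A \subset B -> lexm m B C -> lexm m A C.
Proof.
move=> AB [i [im [lt eq]]]; apply: lexm_weak; exists i; split=> //; split.
  by apply: (leq_ltn_trans _ lt); apply: subset_leq_card; apply: setSI.
by move=> j hj; rewrite -eq //; apply: subset_leq_card; apply: setSI.
Qed.

Lemma Rseq_gen m : (forall i, consistent (E i)) ->
  foldl (@revise V) (Uvec [::]) [seq Uvec (E i) | i <- iota 0 m] = lvsets (posm m) (Am m).
Proof.
move=> cE; elim: m => [|m IH].
  rewrite /= /Uvec cons_nil /lvsets /mkseq /=; congr cons; by apply/setP => w; rewrite !inE.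
rewrite -addn1 iotaD map_cat foldl_cat IH /= add0n Uvec_lv // revise_lv //.
  by rewrite addn1.
by move=> w; apply: posm_lt.
Qed.

End Dft.

Theorem theorem2 (V I : finType) (D : I -> form V * form V)
  (Dinj : injective D) (P : nat -> {set I}) (n : nat)
  (hcons : consistent (arrows D setT)) (hZ : Zpartition D P n)
  (theta phi : form V) :
  lex_cons D P n theta phi <-> seq_cons (Rseq D P n) theta phi.
Proof.
have cE : forall i, consistent (E D P i).
  move=> i; case/consP: hcons => w; rewrite all_arrows => hw.
  by apply/consP; exists w; rewrite all_arrows (subset_trans _ hw) // subsetT.
have RE : Rseq D P n = lvsets (posm D P n.+1) (Am D P n.+1) := Rseq_gen n.+1 cE.
have key : forall w u, posm D P n.+1 w < posm D P n.+1 u <-> lexlt P n (Gw D u) (Gw D w).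
  by move=> w u; rewrite lexltE posm_ltE.
rewrite RE seq_cons_lv; last exact: posm_lt.
split.
  move=> H w sw mw.
  have c1 : consistent (theta :: arrows D (Gw D w)).
    by apply/consP; exists w; rewrite /= sw all_arrows subxx.
  have c2 : ~ (exists G', consistent (theta :: arrows D G') /\ lexlt P n (Gw D w) G').
    case=> G' [/consP [u /= /andP [su]]]; rewrite all_arrows => G'u lt.
    move: (mw u su); rewrite leqNgt => /negP; apply; apply/key.
    by apply/lexltE; apply: lexU1 G'u; apply/lexltE.
  apply: ((entP _ _).1 (H (Gw D w) c1 c2) w).
  by rewrite /= sw all_arrows subxx.
move=> H G cG nG; apply/entP => v /= /andP [sv]; rewrite all_arrows => Gv.
apply: H => // u su; rewrite leqNgt; apply/negP => /key lt.
apply: nG; exists (Gw D u); split.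
  by apply/consP; exists u; rewrite /= su all_arrows subxx.
by apply/lexltE; apply: lexU2 Gv _; apply/lexltE.
Qed.
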